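(* Let $r\geq 11$. Let $G_1=K_4\,\square\, K_4$ be the $4\times 4$ lattice (rook's) graph $L_2(4)$, and let $G_2$ be the Shrikhande graph. Then $Z_{+}(G_1\,\square\, K_r)\neq Z_{+}(G_2\,\square\, K_r)$.
   Context: $K_r$ is the complete graph on $r$ vertices. The Cartesian product $G\,\square\, G'$ has vertex set $V(G)\times V(G')$, with $(g,g')$ adjacent to $(h,h')$ if and only if either $g=h$ and $\{g',h'\}\in E(G')$, or $g'=h'$ and $\{g,h\}\in E(G)$. The Shrikhande graph is the graph with vertex set $\mathbb{Z}_4\times\mathbb{Z}_4$ in which $x$ and $y$ are adjacent if and only if $x-y\in\{\pm(1,0),\pm(0,1),\pm(1,1)\}$; it is obtained from $L_2(4)$ by Seidel switching with respect to a coclique of size 4, and is cospectral with but not isomorphic to $L_2(4)$. The positive semidefinite zero forcing number $Z_{+}(G)$ is the minimum size of a set $S\subseteq V(G)$ such that, coloring $S$ blue and all other vertices white, repeated application of the following rule makes all vertices blue: a white vertex $v$ becomes blue if it is a neighbor of a blue vertex $u$ and no other white neighbor of $u$ is connected to $v$ by a path all of whose vertices are white. *)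

(* Defs.v *)
From mathcomp Require Import all_boot all_order all_algebra.
Set Implicit Arguments. Unset Strict Implicit. Unset Printing Implicit Defensive.
Import GRing.Theory.

(* A simple graph on a finite type is a (symmetric, irreflexive) relation. *)

Definition complete_graph (n : nat) : rel 'I_n := fun i j => i != j.
Arguments complete_graph n : clear implicits.

Definition cart_prod (T1 T2 : finType) (e1 : rel T1) (e2 : rel T2) : rel (T1 * T2) :=
  fun x y => ((x.1 == y.1) && e2 x.2 y.2) || ((x.2 == y.2) && e1 x.1 y.1).

Definition rook44 : rel ('I_4 * 'I_4) := cart_prod (complete_graph 4) (complete_graph 4).

Definition shrikhande : rel ('Z_4 * 'Z_4) := fun x y =>
  (x.1 - y.1, x.2 - y.2)%R \in
    [:: (1, 0); (-1, 0); (0, 1); (0, -1); (1, 1); (-1, -1)]%R.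

Definition white_rel (T : finType) (e : rel T) (B : {set T}) : rel T :=
  fun x y => [&& e x y, x \notin B & y \notin B].

Definition psd_force (T : finType) (e : rel T) (B : {set T}) (v : T) : bool :=
  (v \notin B) &&
  [exists u, [&& u \in B, e u v &
     [forall w, [&& w \notin B, e u w & w != v] ==>
                   ~~ connect (white_rel e B) w v]]].

Inductive psd_derives (T : finType) (e : rel T) : {set T} -> Prop :=
| psd_done B : B = [set: T] -> psd_derives e B
| psd_step B v : psd_force e B v -> psd_derives e (v |: B) -> psd_derives e B.

Definition psd_forcing_set (T : finType) (e : rel T) (S : {set T}) : Prop :=
  psd_derives e S.

Definition is_Zplus (T : finType) (e : rel T) (k : nat) : Prop :=
  (exists S : {set T}, psd_forcing_set e S /\ #|S| = k) /\
  (forall S : {set T}, psd_forcing_set e S -> k <= #|S|).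

(* Main.v *)
Require Import Defs.
From HB Require Import structures.
From mathcomp Require Import all_boot all_order all_algebra.
From mathcomp Require Import zify.
From Stdlib Require Import Classical_Prop.
Set Implicit Arguments. Unset Strict Implicit. Unset Printing Implicit Defensive.

Section Generic.
Variables (T : finType) (e : rel T).
Implicit Types (B C F : {set T}) (u v w : T).

Lemma conn_in (r : rel T) (C : {set T}) a b :
  (forall x y, x \in C -> r x y -> y \in C) -> a \in C -> connect r a b -> b \in C.
Proof.
move=> hC aC /connectP [p pth ->] {b}.
elim: p a aC pth => [|x p IH] a aC //= /andP [rax pth].
exact: IH (hC _ _ aC rax) pth.
Qed.

Lemma white_sym B : symmetric e -> symmetric (white_rel e B).
Proof. by move=> se x y; rewrite /white_rel se; case: (y \in B); case: (x \in B); rewrite ?andbF. Qed.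

Lemma force_mono B B' v : B \subset B' -> v \notin B' -> psd_force e B v -> psd_force e B' v.
Proof.
move=> sBB' vB' /andP [_ /existsP [u /and3P [uB euv /forallP H]]].
rewrite /psd_force vB' /=; apply/existsP; exists u.
rewrite (subsetP sBB' _ uB) euv /=; apply/forallP => w; apply/implyP => /and3P [wB' euw wv].
have wB : w \notin B by apply: contra wB' => /(subsetP sBB').
move: (H w); rewrite wB euw wv /= => /negP nc; apply/negP => c; apply: nc.
apply: connect_sub c => x y /and3P [exy xB' yB']; apply: connect1.
by rewrite /white_rel exy (contra (subsetP sBB' x) xB') (contra (subsetP sBB' y) yB').
Qed.

Lemma derives_mono B B' : psd_derives e B -> B \subset B' -> psd_derives e B'.
Proof.
move=> d; elim: d B' => [B0 -> | B0 v fv _ IH] B' sB.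
  by apply: psd_done; apply/eqP; rewrite eqEsubset subsetT.
case vB': (v \in B').
  by apply: IH; rewrite subUset sub1set vB'.
apply: (psd_step (v := v)); first exact: force_mono sB (negbT vB') fv.
by apply: IH; apply: setUS.
Qed.

Lemma simple_force B u v : u \in B -> v \notin B -> e u v ->
  (forall w, w \notin B -> e u w -> w = v) -> psd_force e B v.
Proof.
move=> uB vB euv H; rewrite /psd_force vB /=; apply/existsP; exists u.
rewrite uB euv /=; apply/forallP => w; apply/implyP => /and3P [wB euw].
by rewrite (H w wB euw) eqxx.
Qed.

Lemma closed_force B u v (C : {set T}) : symmetric e -> u \in B -> v \notin B -> e u v -> v \in C ->
  (forall a b, a \in C -> white_rel e B a b -> b \in C) ->
  (forall w, w \notin B -> e u w -> w != v -> w \notin C) -> psd_force e B v.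
Proof.
move=> se uB vB euv vC hC H; rewrite /psd_force vB /=; apply/existsP; exists u.
rewrite uB euv /=; apply/forallP => w; apply/implyP => /and3P [wB euw wv].
apply/negP => c; move/negP: (H w wB euw wv); apply.
rewrite (sym_connect_sym (white_sym B se)) in c.
exact: conn_in hC vC c.
Qed.

Definition fort_like (F : {set T}) :=
  forall u v, u \notin F -> v \in F -> e u v ->
    exists w, [/\ w \in F, w != v, e u w & connect [rel a b | [&& e a b, a \in F & b \in F]] v w].

Lemma fort_noderive (F : {set T}) B : symmetric e -> fort_like F -> F != set0 ->
  (forall x, x \in F -> x \notin B) -> ~ psd_derives e B.
Proof.
move=> se hF Fn0 dFB d; elim: d dFB => [B0 -> | B0 v fv _ IH] dFB.
  by case/set0Pn: Fn0 => x /dFB; rewrite inE.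
case vF: (v \in F); last first.
  apply: IH => x xF; rewrite !inE negb_or dFB // andbT.
  by apply: contraFN vF => /eqP <-.
move: fv => /andP [vB /existsP [u /and3P [uB euv /forallP H]]].
have uF : u \notin F by apply: contraL uB => /dFB.
have [w [wF wv euw cvw]] := hF u v uF vF euv.
have wB : w \notin B0 by apply: dFB.
move: (H w); rewrite wB euw wv /= => /negP; apply.
rewrite (sym_connect_sym (white_sym B0 se)).
apply: connect_sub cvw => x y /and3P [exy xF yF]; apply: connect1.
by rewrite /white_rel exy (dFB x xF) (dFB y yF).
Qed.

End Generic.


Section Product.
Variables (G : finType) (eG : rel G) (r : nat).
Local Notation P := (cart_prod eG (complete_graph r)).
Implicit Types (B S : {set G * 'I_r}) (I R D : {set G}).

Definition layer B (i : 'I_r) : {set G} := [set g | (g, i) \in B].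
Definition inter B : {set G} := [set g | [forall i, (g, i) \in B]].
Definition Redundant I g := forall R, I \subset R -> psd_derives eG (g |: R) -> psd_derives eG R.
Definition Bnd I (n : nat) :=
  [/\ #|I| < 12 -> n + #|I| <= 12, #|I| = 12 -> n <= 1 /\ (psd_derives eG I -> n = 0)
    & 12 < #|I| -> n = 0].

Lemma P_layer (x y : G) (i : 'I_r) : P (x, i) (y, i) = eG x y.
Proof. by rewrite /cart_prod /complete_graph /= eqxx /= andbF. Qed.

Lemma lift_connect (R : {set G}) B (i : 'I_r) x y :
  (forall z, z \notin R -> (z, i) \notin B) ->
  connect (white_rel eG R) x y -> connect (white_rel P B) (x, i) (y, i).
Proof.
move=> hR /connectP [p pth ->] {y}.
elim: p x pth => [|z p IH] x //= /andP [/and3P [exz xR zR] pth].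
apply: connect_trans (IH z pth); apply: connect1.
by rewrite /white_rel P_layer exz !hR.
Qed.

Lemma redundant_mono I I' g : I \subset I' -> Redundant I g -> Redundant I' g.
Proof. by move=> s H R sR; apply: H; apply: subset_trans sR. Qed.

Lemma derives_redundant I g : psd_derives eG I -> Redundant I g.
Proof. by move=> d R sR _; apply: derives_mono d sR. Qed.

Lemma force_redundant I g : psd_force eG I g -> Redundant I g.
Proof.
move=> f R sR d; case gR: (g \in R).
  by move: d; rewrite (setUidPr _) // sub1set.
apply: psd_step (force_mono sR (negbT gR) f) d.
Qed.

Lemma bnd_le I n n' : n' <= n -> Bnd I n -> Bnd I n'.
Proof.
move=> le [h1 h2 h3]; split.
- by move=> /h1; lia.
- by move=> /h2 [a b]; split; [lia | move=> /b; lia].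
- by move=> /h3; lia.
Qed.

Lemma bnd_mono I I' n : I \subset I' -> #|I'| <= #|I|.+1 -> Bnd I' n -> Bnd I n.
Proof.
move=> s c [h1 h2 h3]; have c1 := subset_leq_card s; split.
- move=> lt; case: (ltngtP #|I'| 12) => [lt'|gt'|eq'].
  + by have := h1 lt'; lia.
  + by lia.
  + by have [h _] := h2 eq'; lia.
- move=> eq; case: (ltngtP #|I'| 12) => [lt'|gt'|eq'].
  + by lia.
  + by rewrite (h3 gt').
  + have [a b] := h2 eq'; split => // d; apply: b; exact: derives_mono d s.
- move=> gt; apply: h3; lia.
Qed.

Hypothesis hFA : forall D, 13 <= #|D| -> psd_derives eG D.
Hypothesis hFB : forall J : {set G}, #|J| = 12 -> psd_derives eG J \/ (forall x, x \in J -> psd_force eG (J :\ x) x).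

Lemma bnd_needed I g n : g \notin I -> ~ Redundant I g -> Bnd (g |: I) n -> Bnd I n.+1.
Proof.
move=> gI nR [h1 h2 h3]; have cg : #|g |: I| = #|I|.+1 by rewrite cardsU1 gI.
have nd : ~ psd_derives eG I by move=> d; apply: nR; apply: derives_redundant.
split.
- move=> lt; case: (ltngtP #|I| 11) => [lt'|gt'|eq'].
  + by have := h1 (ltac:(lia) : #|g |: I| < 12); lia.
  + by lia.
  + have [d|f] := hFB (ltac:(lia) : #|g |: I| = 12).
    * by have [_ /(_ d) ->] := h2 (ltac:(lia) : #|g |: I| = 12); lia.
    * exfalso; apply: nR; apply: force_redundant.
      by have := f g (setU11 g I); rewrite setU1K.
- move=> eq; split; last by move=> d.
  by rewrite (h3 (ltac:(lia) : 12 < #|g |: I|)).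
- by move=> gt; exfalso; apply: nd; apply: hFA; lia.
Qed.

Lemma layer_upd B (g : G) (i k : 'I_r) :
  layer ((g, i) |: B) k = if k == i then g |: layer B k else layer B k.
Proof.
apply/setP => x; rewrite !inE; case: (eqVneq k i) => [->|ki]; rewrite !inE.
  by rewrite xpair_eqE eqxx andbT.
by rewrite xpair_eqE (negbTE ki) andbF.
Qed.

Lemma inter_sub B v : inter B \subset inter (v |: B).
Proof. by apply/subsetP => x; rewrite !inE => /forallP H; apply/forallP => i; rewrite !inE H orbT. Qed.

Lemma inter_upd_sub B (g : G) (i : 'I_r) : inter ((g, i) |: B) \subset g |: inter B.
Proof.
apply/subsetP => x; rewrite !inE => /forallP H; case: (eqVneq x g) => //= xg.
apply/forallP => k; move: (H k); rewrite !inE xpair_eqE (negbTE xg) /=; done.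
Qed.

Definition Qp B := exists U : 'I_r -> {set G},
  (forall i, psd_derives eG (layer B i :|: U i)) /\ Bnd (inter B) (\sum_(i < r) #|U i|).

Lemma core B : psd_derives P B -> Qp B.
Proof.
elim=> [B0 -> | B0 v fv _ [U [hU hB]]].
  exists (fun _ => set0); split.
    by move=> i; apply: psd_done; apply/setP => x; rewrite !inE.
  rewrite big1; last by move=> i _; rewrite cards0.
  by split => [h|_|_] //; lia.
case: v fv hU hB => g i fv hU hB.
move: (fv) => /andP [vB /existsP [[h j] /and3P [uB euv /forallP H]]].
have layerB : forall k, k != i -> layer ((g, i) |: B0) k = layer B0 k.
  by move=> k /negbTE ki; rewrite layer_upd ki.
have layeri : layer ((g, i) |: B0) i = g |: layer B0 i by rewrite layer_upd eqxx.
have csub : #|inter ((g, i) |: B0)| <= #|inter B0|.+1.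
  by apply: leq_trans (subset_leq_card (inter_upd_sub B0 g i)) _; rewrite cardsU1; case: (g \in _).
case: (eqVneq j i) => [ji | ji].
-
  subst j; have ehg : eG h g by move: euv; rewrite /cart_prod /complete_graph /= eqxx andbF.
  exists U; split; last first.
    by apply: bnd_mono hB; [apply: inter_sub | exact: csub].
  move=> k; case: (eqVneq k i) => [-> | ki]; last by rewrite -(layerB k ki).
  have := hU i; rewrite layeri -setUA.
  set R := layer B0 i :|: U i.
  case gR: (g \in R).
    by rewrite (setUidPr _) // sub1set.
  move=> d; apply: psd_step d.
  rewrite /psd_force gR /=; apply/existsP; exists h.
  rewrite ehg !inE uB /=; apply/forallP => w; apply/implyP => /and3P [wR ehw wg].
  have wB : (w, i) \notin B0 by apply: contra wR; rewrite !inE => ->.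
  have := H (w, i); rewrite wB P_layer ehw xpair_eqE (negbTE wg) /= => /negP nc.
  apply/negP => c; apply: nc; apply: lift_connect c.
  by move=> z zR; apply: contra zR; rewrite !inE => ->.
-
  have hg : h = g by move: euv; rewrite /cart_prod /complete_graph /= (negbTE ji) /= orbF => /andP [/eqP].
  subst h.
  have allk : forall k, k != i -> (g, k) \in B0.
    move=> k ki; case: (eqVneq k j) => [-> //| kj]; apply/negPn/negP => gkB.
    have := H (g, k); rewrite gkB /cart_prod /complete_graph /= eqxx /= eq_sym kj xpair_eqE eqxx /= ki.
    move/negP; apply; apply: connect1.
    by rewrite /white_rel /cart_prod /complete_graph /= eqxx ki gkB vB.
  have gI : g \notin inter B0.
    by rewrite inE negb_forall; apply/existsP; exists i.
  have interE : inter ((g, i) |: B0) = g |: inter B0.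
    apply/eqP; rewrite eqEsubset inter_upd_sub /= subUset sub1set inter_sub andbT.
    rewrite inE; apply/forallP => k; rewrite !inE xpair_eqE eqxx /=.
    by case: (eqVneq k i) => //= ki; rewrite allk.
  have [Hr | nHr] := classic (Redundant (layer B0 i) g).
  + exists U; split; last first.
      by apply: bnd_mono hB; [apply: inter_sub | exact: csub].
    move=> k; case: (eqVneq k i) => [-> | ki]; last by rewrite -(layerB k ki).
    apply: (Hr _ (subsetUl _ _)); rewrite setUA -layeri; exact: hU.
  + exists (fun k => if k == i then g |: U k else U k); split.
      move=> k; case: (eqVneq k i) => [-> | ki]; last by rewrite -(layerB k ki).
      by rewrite ?eqxx setUCA setUA -layeri; exact: hU.
    have nI : ~ Redundant (inter B0) g.
      move=> Ri; apply: nHr; apply: redundant_mono Ri.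
      by apply/subsetP => x; rewrite !inE => /forallP.
    apply: (bnd_le (n := (\sum_(k < r) #|U k|).+1)); last first.
      by apply: bnd_needed gI nI _; rewrite -interE.
    rewrite (bigD1 i) //= eqxx [in X in _ <= X](bigD1 i) //= -addSn leq_add //.
      by rewrite cardsU1; case: (g \in U i).
    by apply: eq_leq; apply: eq_bigr => k /negbTE ->.
Qed.

Lemma card_layers S : #|S| = \sum_(i < r) #|layer S i|.
Proof.
have -> : \sum_(i < r) #|layer S i| = \sum_(i < r) \sum_(g : G) (if (g, i) \in S then 1 else 0).
  apply: eq_bigr => i _; rewrite -sum1_card big_mkcond /=.
  by apply: eq_bigr => g _; rewrite inE.
rewrite (exchange_big addn (index_enum 'I_r) (index_enum G) xpredT xpredT).
rewrite -sum1_card big_mkcond /= (pair_bigA _ (fun g i => if (g, i) \in S then 1 else 0)) /=.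
by apply: eq_bigr => -[g i] _.
Qed.

Lemma lower_bound (z : nat) S :
  (forall D, psd_derives eG D -> z <= #|D|) -> psd_derives P S -> z * r <= #|S| + 12.
Proof.
move=> hF0 /core [U [hU hB]].
have sU : \sum_(i < r) #|U i| <= 12.
  case: hB => h1 h2 h3; case: (ltngtP #|inter S| 12) => [lt|gt|eq].
  - by apply: leq_trans (h1 lt); apply: leq_addr.
  - by rewrite (h3 gt).
  - by case: (h2 eq) => a _; apply: leq_trans a _.
rewrite card_layers; apply: leq_trans (leq_add (leqnn _) sU).
rewrite -big_split /=.
have H : forall i : 'I_r, z <= #|layer S i| + #|U i|.
  by move=> i; apply: leq_trans (hF0 _ (hU i)) _; exact: leq_card_setU.
rewrite -iter_addn_0 -big_const_ord; apply: leq_sum => i _; exact: H.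
Qed.

End Product.


Section Upper.
Variables (G : finType) (eG : rel G) (r : nat).
Local Notation P := (cart_prod eG (complete_graph r)).
Implicit Types (B S : {set G * 'I_r}) (D T : {set G}).

Lemma P_sym : symmetric eG -> symmetric P.
Proof.
move=> se [x i] [y j]; rewrite /cart_prod /complete_graph /=.
by rewrite (se x y) (eq_sym x y) (eq_sym i j).
Qed.

Lemma lift D : psd_derives eG D -> forall B, (forall g i, g \in D -> (g, i) \in B) -> psd_derives P B.
Proof.
elim=> [D0 -> | D0 g fg _ IH] B hB.
  by apply: psd_done; apply/setP => -[g i]; rewrite !inE hB ?inE.
move: (fg) => /andP [gD /existsP [h /and3P [hD ehg /forallP H]]].
suff: forall n B, #|[set i | (g, i) \notin B]| <= n -> (forall g i, g \in D0 -> (g, i) \in B) -> psd_derives P B.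
  by move=> /(_ _ B (leqnn _) hB).
elim=> [|n IHn] B1.
  move=> c h1; apply: IH => g' i; case/setU1P => [-> |]; last exact: h1.
  by apply/negPn/negP => gi; move: c; rewrite leqn0 cards_eq0 => /eqP /setP /(_ i); rewrite !inE gi.
move=> c h1; case: (set_0Vmem [set i | (g, i) \notin B1]) => [e0 | [i]].
  by apply: (IHn B1) => //; rewrite e0 cards0.
rewrite inE => giB; apply: (psd_step (v := (g, i))).
  rewrite /psd_force giB /=; apply/existsP; exists (h, i).
  rewrite (h1 _ _ hD) P_layer ehg /=; apply/forallP => -[w k]; apply/implyP => /and3P [wB ehw wv].
  have ki : k = i.
    move: ehw; rewrite /cart_prod /complete_graph /=; case: (eqVneq h w) => [hw|] /=.
      by subst w; rewrite (h1 _ _ hD) in wB.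
    by move=> _ /andP [/eqP ->].
  subst k; rewrite P_layer in ehw.
  have wD : w \notin D0 by apply: contra wB => /h1.
  have wg : w != g by move: wv; rewrite xpair_eqE eqxx andbT.
  have := H w; rewrite wD ehw wg /= => nc.
  apply/negP => cc.
  have: (g, i) \in [set x | connect (white_rel eG D0) w x.1].
    apply: (conn_in (r := white_rel P B1) _ _ cc); last by rewrite inE connect0.
    move=> [a ka] [b kb]; rewrite !inE /= => cwa /and3P [eab aB bB].
    have bD : b \notin D0 by apply: contra bB => /h1.
    have aD : a \notin D0 by apply: contra aB => /h1.
    move: eab; rewrite /cart_prod /complete_graph /= => /orP [/andP [/eqP <- _] // | /andP [_ eab]].
    by apply: connect_trans cwa (connect1 _); rewrite /white_rel eab aD bD.
  by rewrite inE /= (negbTE nc).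
have h2 : forall g' i', g' \in D0 -> (g', i') \in (g, i) |: B1 by move=> g' i' hg; rewrite inE h1 ?orbT.
apply: (IHn _ _ h2).
rewrite -ltnS; apply: leq_trans c; apply: proper_card; rewrite properE; apply/andP; split.
  by apply/subsetP => k; rewrite !inE negb_or => /andP [].
by apply/subsetPn; exists i; rewrite !inE ?giB // eqxx.
Qed.
Variables (T : {set G}) (last j0 : 'I_r).
Hypotheses (seG : symmetric eG) (dT : psd_derives eG T) (j0l : j0 != last).

Definition Sstar : {set G * 'I_r} := [set x | if x.2 == last then x.1 \notin T else x.1 \in T].

Lemma phase1 n B : #|[set t in T | (t, last) \notin B]| <= n ->
  (forall g i, i != last -> g \in T -> (g, i) \in B) ->
  (forall g, g \notin T -> (g, last) \in B) -> psd_derives P B.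
Proof.
elim: n B => [|n IHn] B c h1 h2.
  apply: (lift dT) => g i gT; case: (eqVneq i last) => [-> | il]; last exact: h1.
  apply/negPn/negP => gl; move: c; rewrite leqn0 cards_eq0 => /eqP /setP /(_ g).
  by rewrite !inE gT gl.
case: (set_0Vmem [set t in T | (t, last) \notin B]) => [e0 | [t]].
  by apply: (IHn B) => //; rewrite e0 cards0.
rewrite inE => /andP [tT tB].
apply: (psd_step (v := (t, last))).
  apply: (closed_force (u := (t, j0)) (C := [set x : G * 'I_r | x.2 == last])) => //.
  + exact: P_sym.
  + by rewrite h1.
  + by rewrite /cart_prod /complete_graph /= eqxx j0l.
  + by rewrite inE.
  + move=> [a ka] [b kb]; rewrite !inE /= => /eqP -> /and3P [eab aB bB].
    move: eab; rewrite /cart_prod /complete_graph /= => /orP [/andP [/eqP ab kl] | /andP [/eqP <- _]] //.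
    exfalso; subst b; have aT : a \in T by apply: contraR aB => /h2.
    by rewrite h1 // eq_sym in bB.
  + move=> [w k] wB; rewrite /cart_prod /complete_graph /= => /orP [/andP [/eqP <- jk] | /andP [/eqP <- _]] wv;
      rewrite inE /=.
    * by apply/negP => /eqP kl; subst k; rewrite eqxx in wv.
    * exact: j0l.
have h1' : forall g i, i != last -> g \in T -> (g, i) \in (t, last) |: B.
  by move=> g i il gT; rewrite inE h1 ?orbT.
have h2' : forall g, g \notin T -> (g, last) \in (t, last) |: B.
  by move=> g gT; rewrite inE h2 ?orbT.
apply: (IHn _ _ h1' h2').
rewrite -ltnS; apply: leq_trans c; apply: proper_card; rewrite properE; apply/andP; split.
  by apply/subsetP => k; rewrite !inE negb_or => /andP [-> /andP []].
by apply/subsetPn; exists t; rewrite !inE ?tT ?tB // eqxx.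
Qed.

Lemma upper : psd_derives P Sstar.
Proof.
apply: (phase1 (leqnn _)).
- by move=> g i il gT; rewrite inE /= (negbTE il).
- by move=> g gT; rewrite inE /= eqxx.
Qed.

Lemma card_Sstar : #|Sstar| + #|T| = r * #|T| + #|~: T|.
Proof.
rewrite card_layers.
have lE0 : forall i, layer Sstar i = if i == last then ~: T else T.
  by move=> i; apply/setP => g; rewrite !inE /=; case: (i == last); rewrite ?inE.
have lE : forall i, #|layer Sstar i| = if i == last then #|~: T| else #|T|.
  by move=> i; rewrite lE0; case: (i == last).
rewrite (eq_bigr _ (fun i _ => lE i)) (bigD1 last) //= eqxx.
have E : \sum_(i < r) #|T| = #|T| + \sum_(i < r | i != last) #|T| by rewrite (bigD1 last).
rewrite big_const_ord iter_addn_0 in E.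
rewrite (eq_bigr (fun _ => #|T|)); first by move: E; set S1 := \sum_(i < r | i != last) #|T|; rewrite mulnC; lia.
by move=> i /negbTE ->.
Qed.

End Upper.

Inductive i16 : Type := I0 | I1 | I2 | I3 | I4 | I5 | I6 | I7 | I8 | I9 | I10 | I11 | I12 | I13 | I14 | I15.
Scheme Equality for i16.
Record s16 : Type := S16 { b0 : bool; b1 : bool; b2 : bool; b3 : bool; b4 : bool; b5 : bool; b6 : bool; b7 : bool; b8 : bool; b9 : bool; b10 : bool; b11 : bool; b12 : bool; b13 : bool; b14 : bool; b15 : bool }.
Definition get (s : s16) (i : i16) : bool := match i with I0 => b0 s | I1 => b1 s | I2 => b2 s | I3 => b3 s | I4 => b4 s | I5 => b5 s | I6 => b6 s | I7 => b7 s | I8 => b8 s | I9 => b9 s | I10 => b10 s | I11 => b11 s | I12 => b12 s | I13 => b13 s | I14 => b14 s | I15 => b15 s end.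
Definition mk16 (f : i16 -> bool) : s16 := S16 (f I0) (f I1) (f I2) (f I3) (f I4) (f I5) (f I6) (f I7) (f I8) (f I9) (f I10) (f I11) (f I12) (f I13) (f I14) (f I15).
Definition enum16 : seq i16 := [:: I0; I1; I2; I3; I4; I5; I6; I7; I8; I9; I10; I11; I12; I13; I14; I15].
Definition i16_to_nat (i : i16) : nat := match i with I0 => 0 | I1 => 1 | I2 => 2 | I3 => 3 | I4 => 4 | I5 => 5 | I6 => 6 | I7 => 7 | I8 => 8 | I9 => 9 | I10 => 10 | I11 => 11 | I12 => 12 | I13 => 13 | I14 => 14 | I15 => 15 end.
Definition tf : seq bool := [:: true; false].
Definition allsets (p : s16 -> bool) : bool := all (fun b0 => all (fun b1 => all (fun b2 => all (fun b3 => all (fun b4 => all (fun b5 => all (fun b6 => all (fun b7 => all (fun b8 => all (fun b9 => all (fun b10 => all (fun b11 => all (fun b12 => all (fun b13 => all (fun b14 => all (fun b15 => p (S16 b0 b1 b2 b3 b4 b5 b6 b7 b8 b9 b10 b11 b12 b13 b14 b15)) tf) tf) tf) tf) tf) tf) tf) tf) tf) tf) tf) tf) tf) tf) tf) tf.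
Definition nbrs_rook (i : i16) : seq i16 := match i with I0 => [:: I1; I2; I3; I4; I8; I12] | I1 => [:: I0; I2; I3; I5; I9; I13] | I2 => [:: I0; I1; I3; I6; I10; I14] | I3 => [:: I0; I1; I2; I7; I11; I15] | I4 => [:: I0; I5; I6; I7; I8; I12] | I5 => [:: I1; I4; I6; I7; I9; I13] | I6 => [:: I2; I4; I5; I7; I10; I14] | I7 => [:: I3; I4; I5; I6; I11; I15] | I8 => [:: I0; I4; I9; I10; I11; I12] | I9 => [:: I1; I5; I8; I10; I11; I13] | I10 => [:: I2; I6; I8; I9; I11; I14] | I11 => [:: I3; I7; I8; I9; I10; I15] | I12 => [:: I0; I4; I8; I13; I14; I15] | I13 => [:: I1; I5; I9; I12; I14; I15] | I14 => [:: I2; I6; I10; I12; I13; I15] | I15 => [:: I3; I7; I11; I12; I13; I14] end.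
Definition nbrs_shri (i : i16) : seq i16 := match i with I0 => [:: I1; I3; I4; I5; I12; I15] | I1 => [:: I0; I2; I5; I6; I12; I13] | I2 => [:: I1; I3; I6; I7; I13; I14] | I3 => [:: I0; I2; I4; I7; I14; I15] | I4 => [:: I0; I3; I5; I7; I8; I9] | I5 => [:: I0; I1; I4; I6; I9; I10] | I6 => [:: I1; I2; I5; I7; I10; I11] | I7 => [:: I2; I3; I4; I6; I8; I11] | I8 => [:: I4; I7; I9; I11; I12; I13] | I9 => [:: I4; I5; I8; I10; I13; I14] | I10 => [:: I5; I6; I9; I11; I14; I15] | I11 => [:: I6; I7; I8; I10; I12; I15] | I12 => [:: I0; I1; I8; I11; I13; I15] | I13 => [:: I1; I2; I8; I9; I12; I14] | I14 => [:: I2; I3; I9; I10; I13; I15] | I15 => [:: I0; I3; I10; I11; I12; I14] end.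
Definition smallforts : seq (seq i16) := [:: [:: I0; I1; I4; I5];
  [:: I0; I2; I4; I6];
  [:: I1; I2; I5; I6];
  [:: I0; I3; I4; I7];
  [:: I1; I3; I5; I7];
  [:: I2; I3; I6; I7];
  [:: I0; I1; I8; I9];
  [:: I4; I5; I8; I9];
  [:: I1; I2; I4; I6; I8; I9];
  [:: I0; I2; I5; I6; I8; I9];
  [:: I1; I3; I4; I7; I8; I9];
  [:: I0; I3; I5; I7; I8; I9];
  [:: I0; I2; I8; I10];
  [:: I1; I2; I4; I5; I8; I10];
  [:: I4; I6; I8; I10];
  [:: I0; I1; I5; I6; I8; I10];
  [:: I2; I3; I4; I7; I8; I10];
  [:: I0; I3; I6; I7; I8; I10];
  [:: I1; I2; I9; I10];
  [:: I0; I2; I4; I5; I9; I10];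
  [:: I0; I1; I4; I6; I9; I10];
  [:: I5; I6; I9; I10];
  [:: I2; I3; I5; I7; I9; I10];
  [:: I1; I3; I6; I7; I9; I10];
  [:: I0; I3; I8; I11];
  [:: I1; I3; I4; I5; I8; I11];
  [:: I2; I3; I4; I6; I8; I11];
  [:: I4; I7; I8; I11];
  [:: I0; I1; I5; I7; I8; I11];
  [:: I0; I2; I6; I7; I8; I11];
  [:: I1; I3; I9; I11];
  [:: I0; I3; I4; I5; I9; I11];
  [:: I2; I3; I5; I6; I9; I11];
  [:: I0; I1; I4; I7; I9; I11];
  [:: I5; I7; I9; I11];
  [:: I1; I2; I6; I7; I9; I11];
  [:: I2; I3; I10; I11];
  [:: I0; I3; I4; I6; I10; I11];
  [:: I1; I3; I5; I6; I10; I11];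
  [:: I0; I2; I4; I7; I10; I11];
  [:: I1; I2; I5; I7; I10; I11];
  [:: I6; I7; I10; I11];
  [:: I0; I1; I12; I13];
  [:: I4; I5; I12; I13];
  [:: I1; I2; I4; I6; I12; I13];
  [:: I0; I2; I5; I6; I12; I13];
  [:: I1; I3; I4; I7; I12; I13];
  [:: I0; I3; I5; I7; I12; I13];
  [:: I8; I9; I12; I13];
  [:: I1; I2; I8; I10; I12; I13];
  [:: I5; I6; I8; I10; I12; I13];
  [:: I0; I2; I9; I10; I12; I13];
  [:: I4; I6; I9; I10; I12; I13];
  [:: I1; I3; I8; I11; I12; I13];
  [:: I5; I7; I8; I11; I12; I13];
  [:: I0; I3; I9; I11; I12; I13];
  [:: I4; I7; I9; I11; I12; I13];
  [:: I0; I2; I12; I14];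
  [:: I1; I2; I4; I5; I12; I14];
  [:: I4; I6; I12; I14];
  [:: I0; I1; I5; I6; I12; I14];
  [:: I2; I3; I4; I7; I12; I14];
  [:: I0; I3; I6; I7; I12; I14];
  [:: I1; I2; I8; I9; I12; I14];
  [:: I5; I6; I8; I9; I12; I14];
  [:: I8; I10; I12; I14];
  [:: I0; I1; I9; I10; I12; I14];
  [:: I4; I5; I9; I10; I12; I14];
  [:: I2; I3; I8; I11; I12; I14];
  [:: I6; I7; I8; I11; I12; I14];
  [:: I0; I3; I10; I11; I12; I14];
  [:: I4; I7; I10; I11; I12; I14];
  [:: I1; I2; I13; I14];
  [:: I0; I2; I4; I5; I13; I14];
  [:: I0; I1; I4; I6; I13; I14];
  [:: I5; I6; I13; I14];
  [:: I2; I3; I5; I7; I13; I14];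
  [:: I1; I3; I6; I7; I13; I14];
  [:: I0; I2; I8; I9; I13; I14];
  [:: I4; I6; I8; I9; I13; I14];
  [:: I0; I1; I8; I10; I13; I14];
  [:: I4; I5; I8; I10; I13; I14];
  [:: I9; I10; I13; I14];
  [:: I2; I3; I9; I11; I13; I14];
  [:: I6; I7; I9; I11; I13; I14];
  [:: I1; I3; I10; I11; I13; I14];
  [:: I5; I7; I10; I11; I13; I14];
  [:: I0; I3; I12; I15];
  [:: I1; I3; I4; I5; I12; I15];
  [:: I2; I3; I4; I6; I12; I15];
  [:: I4; I7; I12; I15];
  [:: I0; I1; I5; I7; I12; I15];
  [:: I0; I2; I6; I7; I12; I15];
  [:: I1; I3; I8; I9; I12; I15];
  [:: I5; I7; I8; I9; I12; I15];
  [:: I2; I3; I8; I10; I12; I15];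
  [:: I6; I7; I8; I10; I12; I15];
  [:: I8; I11; I12; I15];
  [:: I0; I1; I9; I11; I12; I15];
  [:: I4; I5; I9; I11; I12; I15];
  [:: I0; I2; I10; I11; I12; I15];
  [:: I4; I6; I10; I11; I12; I15];
  [:: I1; I3; I13; I15];
  [:: I0; I3; I4; I5; I13; I15];
  [:: I2; I3; I5; I6; I13; I15];
  [:: I0; I1; I4; I7; I13; I15];
  [:: I5; I7; I13; I15];
  [:: I1; I2; I6; I7; I13; I15];
  [:: I0; I3; I8; I9; I13; I15];
  [:: I4; I7; I8; I9; I13; I15];
  [:: I2; I3; I9; I10; I13; I15];
  [:: I6; I7; I9; I10; I13; I15];
  [:: I0; I1; I8; I11; I13; I15];
  [:: I4; I5; I8; I11; I13; I15];
  [:: I9; I11; I13; I15];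
  [:: I1; I2; I10; I11; I13; I15];
  [:: I5; I6; I10; I11; I13; I15];
  [:: I2; I3; I14; I15];
  [:: I0; I3; I4; I6; I14; I15];
  [:: I1; I3; I5; I6; I14; I15];
  [:: I0; I2; I4; I7; I14; I15];
  [:: I1; I2; I5; I7; I14; I15];
  [:: I6; I7; I14; I15];
  [:: I0; I3; I8; I10; I14; I15];
  [:: I4; I7; I8; I10; I14; I15];
  [:: I1; I3; I9; I10; I14; I15];
  [:: I5; I7; I9; I10; I14; I15];
  [:: I0; I2; I8; I11; I14; I15];
  [:: I4; I6; I8; I11; I14; I15];
  [:: I1; I2; I9; I11; I14; I15];
  [:: I5; I6; I9; I11; I14; I15];
  [:: I10; I11; I14; I15]].
Lemma i16_eqP : Equality.axiom i16_beq.
Proof. move=> x y; apply: (iffP idP); [exact: internal_i16_dec_bl | exact: internal_i16_dec_lb]. Qed.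
HB.instance Definition _ := hasDecEq.Build i16 i16_eqP.

Fixpoint find_map (A C : Type) (f : A -> option C) (l : seq A) : option C :=
  match l with [::] => None | x :: l' => match f x with Some y => Some y | None => find_map f l' end end.

Fixpoint lall (A : Type) (p : A -> bool) (s : seq A) : bool :=
  match s with [::] => true | x :: s' => if p x then lall p s' else false end.
Fixpoint lhas (A : Type) (p : A -> bool) (s : seq A) : bool :=
  match s with [::] => false | x :: s' => if p x then true else lhas p s' end.
Lemma lallE (A : Type) (p : A -> bool) s : lall p s = all p s.
Proof. by elim: s => //= x s ->; case: (p x). Qed.
Lemma lhasE (A : Type) (p : A -> bool) s : lhas p s = has p s.
Proof. by elim: s => //= x s ->; case: (p x). Qed.

Section Comp.
Variable nb : i16 -> seq i16.
Definition adjb (i j : i16) : bool := j \in nb i.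
Definition simpleb (B : s16) (u v : i16) : bool :=
  [&& get B u, ~~ get B v, adjb u v & all (fun w => get B w || (w == v)) (nb u)].
Definition simple_find (B : s16) : option (i16 * i16) :=
  find_map (fun u => if get B u then
     match [seq w <- nb u | ~~ get B w] with [:: w] => Some (u, w) | _ => None end else None) enum16.
Definition upd (B : s16) (v : i16) : s16 := mk16 (fun i => (i == v) || get B i).
Definition full (B : s16) : bool := all (get B) enum16.
Definition stepF (F S : s16) : s16 := mk16 (fun i => get S i || (get F i && has (get S) (nb i))).
Definition single (v : i16) : s16 := mk16 (fun i => i == v).
Definition reach (F : s16) (v : i16) : s16 := iter 8 (stepF F) (single v).
Definition compl (B : s16) : s16 := mk16 (fun i => ~~ get B i).
Definition closedb (B C : s16) : bool :=
  all (fun a => get C a ==> (get B a || all (fun b => get B b || get C b) (nb a))) enum16.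
Definition forceb (B : s16) (u v : i16) (C : s16) : bool :=
  [&& get B u, ~~ get B v, adjb u v, get C v, closedb B C &
      all (fun w => [|| get B w, w == v | ~~ get C w]) (nb u)].
Definition psd_find (B : s16) : option (i16 * i16 * s16) :=
  find_map (fun v => if get B v then None else
     let C := reach (compl B) v in
     find_map (fun u => if forceb B u v C then Some (u, v, C) else None) (nb v)) enum16.
Fixpoint sderive (fuel : nat) (B : s16) : bool :=
  match fuel with 0 => full B | S f => if full B then true else
    match simple_find B with Some (u, v) => if simpleb B u v then sderive f (upd B v) else false | None => false end end.
Fixpoint derive (fuel : nat) (B : s16) : bool :=
  match fuel with 0 => full B | S f => if full B then true else
    match simple_find B with
    | Some (u, v) => if simpleb B u v then derive f (upd B v) else false
    | None => match psd_find B with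
              | Some (u, v, C) => if forceb B u v C then derive f (upd B v) else false
              | None => false end end end.
Definition fortb (F : s16) : bool :=
  if lhas (get F) enum16 then
  lall (fun v => if get F v then let R := reach F v in
        lall (fun u => if get F u then true else lhas (fun w => if get F w then (if w != v then get R w else false) else false) (nb u)) (nb v)
        else true) enum16 else false.
Definition cnt (B : s16) : nat := count (get B) enum16.
Definition of_list (l : seq i16) : s16 := mk16 (fun i => i \in l).
Definition del (B : s16) (x : i16) : s16 := mk16 (fun i => (i != x) && get B i).
Definition checkF0 (B : s16) : bool :=
  if cnt B == 9 then
    (if lhas (fun F => lall (fun i => ~~ get B i) F) smallforts then true else fortb (compl B))
  else true.
Definition checkFA (B : s16) : bool := if cnt B < 13 then true else sderive 16 B.
Definition checkFB (B : s16) : bool :=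
  if cnt B == 12 then
    (if sderive 16 B then true else
     if lall (fun x => if get B x then lhas (fun u => simpleb (del B x) u x) (nb x) else true) enum16 then true
     else derive 16 B)
  else true.
End Comp.

Lemma get_mk16 f i : get (mk16 f) i = f i.
Proof. by case: i. Qed.
Lemma mk16_get s : mk16 (get s) = s.
Proof. by case: s. Qed.
Lemma mk16_ext f g : (forall i, f i = g i) -> mk16 f = mk16 g.
Proof. by move=> H; rewrite /mk16 !H. Qed.
Lemma mem_enum16 i : i \in enum16.
Proof. by case: i. Qed.
Lemma uniq_enum16 : uniq enum16.
Proof. by []. Qed.
Lemma mem_tf b : b \in tf.
Proof. by case: b. Qed.
Lemma allsets_sound p : allsets p -> forall s, p s.
Proof. move=> H [b0 b1 b2 b3 b4 b5 b6 b7 b8 b9 b10 b11 b12 b13 b14 b15].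
by move: H; rewrite /allsets => /allP/(_ b0 (mem_tf b0)) /allP/(_ b1 (mem_tf b1)) /allP/(_ b2 (mem_tf b2)) /allP/(_ b3 (mem_tf b3)) /allP/(_ b4 (mem_tf b4)) /allP/(_ b5 (mem_tf b5)) /allP/(_ b6 (mem_tf b6)) /allP/(_ b7 (mem_tf b7)) /allP/(_ b8 (mem_tf b8)) /allP/(_ b9 (mem_tf b9)) /allP/(_ b10 (mem_tf b10)) /allP/(_ b11 (mem_tf b11)) /allP/(_ b12 (mem_tf b12)) /allP/(_ b13 (mem_tf b13)) /allP/(_ b14 (mem_tf b14)) /allP/(_ b15 (mem_tf b15)).
Qed.

Section Link.
Variables (V : finType) (e : rel V) (nb : i16 -> seq i16) (vert : i16 -> V) (idx : V -> i16).
Hypotheses (Hvi : forall v, vert (idx v) = v) (Hiv : forall i, idx (vert i) = i)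
  (He : forall i j, e (vert i) (vert j) = adjb nb i j) (Hs : symmetric e).
Implicit Types (B : {set V}).

Definition bits B : s16 := mk16 (fun i => vert i \in B).
Definition setOf (s : s16) : {set V} := [set v | get s (idx v)].

Lemma vert_inj : injective vert.
Proof. exact: can_inj Hiv. Qed.
Lemma get_bits B i : get (bits B) i = (vert i \in B).
Proof. by rewrite get_mk16. Qed.
Lemma inB v B : (v \in B) = get (bits B) (idx v).
Proof. by rewrite get_bits Hvi. Qed.
Lemma in_setOf v s : (v \in setOf s) = get s (idx v).
Proof. by rewrite inE. Qed.
Lemma bits_setOf s : bits (setOf s) = s.
Proof. by rewrite -[RHS]mk16_get; apply: mk16_ext => i; rewrite in_setOf Hiv. Qed.
Lemma e_idx v w : e v w = adjb nb (idx v) (idx w).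
Proof. by rewrite -He !Hvi. Qed.

Lemma upd_bits B v : upd (bits B) v = bits (vert v |: B).
Proof.
by apply: mk16_ext => i; rewrite get_mk16 !inE (inj_eq vert_inj).
Qed.

Lemma full_sound B : full (bits B) -> B = setT.
Proof.
move/allP => H; apply/setP => x; rewrite inE inB; exact: H (mem_enum16 _).
Qed.

Lemma simpleb_sound B u v : simpleb nb (bits B) u v -> psd_force e B (vert v).
Proof.
case/and4P => uB vB auv /allP H; apply: (simple_force (u := vert u)).
- by rewrite -get_bits.
- by rewrite -get_bits.
- by rewrite He.
- move=> w wB euw; have iw : idx w \in nb u by move: euw; rewrite e_idx Hiv.
  move: (H _ iw); rewrite -inB (negbTE wB) /= => /eqP <-; by rewrite Hvi.
Qed.

Lemma forceb_sound B u v C : forceb nb (bits B) u v C -> psd_force e B (vert v).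
Proof.
case/and5P => uB vB auv Cv /andP [/allP cl /allP H].
apply: (closed_force (u := vert u) (C := setOf C)) => //.
- by rewrite -get_bits.
- by rewrite -get_bits.
- by rewrite He.
- by rewrite in_setOf Hiv.
- move=> a b; rewrite !in_setOf => Ca /and3P [eab aB bB].
  move: (cl _ (mem_enum16 (idx a))); rewrite Ca /= -inB (negbTE aB) /= => /allP /(_ (idx b)).
  have ib : idx b \in nb (idx a) by move: eab; rewrite e_idx.
  by move=> /(_ ib); rewrite -inB (negbTE bB).
- move=> w wB euw wv; have iw : idx w \in nb u by move: euw; rewrite e_idx Hiv.
  move: (H _ iw); rewrite -inB (negbTE wB) /= in_setOf.
  have -> : (idx w == v) = false by apply/negbTE; apply: contra wv => /eqP <-; rewrite Hvi.
  done.
Qed.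

Lemma sderive_sound n B : sderive nb n (bits B) -> psd_derives e B.
Proof.
elim: n B => [|n IH] B /=; first by move=> /full_sound ->; apply: psd_done.
case: ifP => [/full_sound -> _|_]; first exact: psd_done.
case: (simple_find nb (bits B)) => [[u v]|] //.
case: ifP => // sb; rewrite upd_bits => /IH d.
exact: psd_step (simpleb_sound sb) d.
Qed.

Lemma derive_sound n B : derive nb n (bits B) -> psd_derives e B.
Proof.
elim: n B => [|n IH] B /=; first by move=> /full_sound ->; apply: psd_done.
case: ifP => [/full_sound -> _|_]; first exact: psd_done.
case: (simple_find nb (bits B)) => [[u v]|].
  case: ifP => // sb; rewrite upd_bits => /IH d.
  exact: psd_step (simpleb_sound sb) d.
case: (psd_find nb (bits B)) => [[[u v] C]|] //.
case: ifP => // fb; rewrite upd_bits => /IH d.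
exact: psd_step (forceb_sound fb) d.
Qed.

Definition relF (F : s16) := [rel a b | [&& e a b, a \in setOf F & b \in setOf F]].

Lemma reach_sound F v k i : get F v -> get (iter k (stepF nb F) (single v)) i ->
  get F i && connect (relF F) (vert v) (vert i).
Proof.
move=> Fv; elim: k i => [|k IH] i /=.
  by rewrite get_mk16 => /eqP ->; rewrite Fv connect0.
rewrite get_mk16 => /orP [/IH // | /andP [Fi /hasP [a ia /IH /andP [Fa c]]]].
rewrite Fi /=; apply: connect_trans c (connect1 _).
by rewrite /= Hs He /adjb ia !in_setOf !Hiv Fa Fi.
Qed.

Lemma fortb_sound F : fortb nb F -> fort_like e (setOf F) /\ setOf F != set0.
Proof.
rewrite /fortb lhasE; case: ifP => // /hasP [i0 _ Fi0].
rewrite lallE => /allP H; split; last first.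
  by apply/set0Pn; exists (vert i0); rewrite in_setOf Hiv.
move=> u v; rewrite !in_setOf => uF vF euv.
move: (H _ (mem_enum16 (idx v))); rewrite vF lallE => /allP /(_ (idx u)).
have iu : idx u \in nb (idx v) by move: euv; rewrite Hs e_idx.
rewrite iu (negbTE uF) lhasE => /(_ isT) /hasP [w iw].
case Fw: (get F w) => //; case: ifP => // wv Rw.
exists (vert w); split.
- by rewrite in_setOf Hiv.
- by apply: contra wv => /eqP <-; rewrite Hiv.
- by rewrite e_idx Hiv.
- by have := reach_sound vF Rw; rewrite Hvi => /andP [].
Qed.

Lemma card_bits B : #|B| = cnt (bits B).
Proof.
rewrite cardE /cnt.
have U : uniq (map vert enum16) by rewrite (map_inj_uniq vert_inj) uniq_enum16.
have -> : size (enum B) = size [seq x <- map vert enum16 | x \in B].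
  apply: perm_size; apply: uniq_perm; [exact: enum_uniq | exact: filter_uniq |].
  move=> x; rewrite mem_enum mem_filter.
  have -> : x \in map vert enum16 by rewrite -(Hvi x); apply: map_f; exact: mem_enum16.
  by rewrite andbT.
rewrite size_filter count_map; apply: eq_count => i; by rewrite /= get_bits.
Qed.

End Link.


Definition nat_to_i16 (n : nat) : i16 := match n with 0 => I0 | 1 => I1 | 2 => I2 | 3 => I3 | 4 => I4 | 5 => I5 | 6 => I6 | 7 => I7 | 8 => I8 | 9 => I9 | 10 => I10 | 11 => I11 | 12 => I12 | 13 => I13 | 14 => I14 | _ => I15 end.

Lemma extend_set (T : finType) (A : {set T}) n : #|A| <= n -> n <= #|T| ->
  exists A' : {set T}, A \subset A' /\ #|A'| = n.
Proof.
move=> h1 h2; move: {2}(n - #|A|) (erefl (n - #|A|)) => k; elim: k A h1 => [|k IH] A h1 hk.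
  by exists A; split => //; lia.
case: (pickP (fun x => x \notin A)) => [x xA | H]; last first.
  have AT : A = setT by apply/setP => y; rewrite inE; apply/negbFE; exact: H.
  by move: h1 h2 hk; rewrite AT cardsT; lia.
have c1 : #|x |: A| = #|A|.+1 by rewrite cardsU1 xA.
have [A' [s c]] := IH (x |: A) (ltac:(lia)) (ltac:(lia)).
by exists A'; split => //; apply: subset_trans s; apply: subsetUr.
Qed.

Section Facts.
Variables (V : finType) (e : rel V) (nb : i16 -> seq i16) (vert : i16 -> V) (idx : V -> i16).
Hypotheses (Hvi : forall v, vert (idx v) = v) (Hiv : forall i, idx (vert i) = i)
  (He : forall i j, e (vert i) (vert j) = adjb nb i j) (Hs : symmetric e).

Implicit Types (B D J : {set V}).

Lemma del_bits B x : del (bits vert B) (idx x) = bits vert (B :\ x).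
Proof.
apply: mk16_ext => i; rewrite get_mk16 !inE; congr (_ && _).
by rewrite -{1}(Hiv i) (inj_eq (can_inj Hvi)).
Qed.

Lemma cardV : #|V| = 16.
Proof.
rewrite -cardsT (card_bits Hvi Hiv) /cnt (eq_count (a2 := predT)) //.
by move=> i; rewrite get_bits inE.
Qed.

Lemma F0_gen : allsets (checkF0 nb) -> lall (fun F => fortb nb (of_list F)) smallforts ->
  forall B, psd_derives e B -> 10 <= #|B|.
Proof.
move=> hc hs B d; rewrite leqNgt; apply/negP => lt.
have [B9 [sB c9]] := extend_set (n := 9) (ltac:(lia) : #|B| <= 9) (ltac:(rewrite cardV; lia)).
have d9 := derives_mono d sB.
have := allsets_sound hc (bits vert B9); rewrite /checkF0 -(card_bits Hvi Hiv) c9 eqxx lhasE.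
case: ifP => [/hasP [F Fs HF] _ | _ hf].
  rewrite lallE in hs; have [fl ne] := fortb_sound Hvi Hiv He Hs (allP hs F Fs).
  apply: (fort_noderive Hs fl ne _ d9) => x; rewrite in_setOf get_mk16 => xF.
  rewrite lallE in HF; rewrite (inB Hvi); exact: (allP HF _ xF).
have [fl ne] := fortb_sound Hvi Hiv He Hs hf.
apply: (fort_noderive Hs fl ne _ d9) => x; rewrite in_setOf get_mk16.
by rewrite (inB Hvi).
Qed.

Lemma FA_gen : allsets (checkFA nb) -> forall D, 13 <= #|D| -> psd_derives e D.
Proof.
move=> hc D c; have := allsets_sound hc (bits vert D); rewrite /checkFA -(card_bits Hvi Hiv).
case: ifP => [lt _|_ sd]; first by move: lt; rewrite ltnNge c.
exact: (@sderive_sound V e nb vert idx Hvi Hiv He 16 D sd).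
Qed.

Lemma FB_gen : allsets (checkFB nb) -> forall J, #|J| = 12 ->
  psd_derives e J \/ (forall x, x \in J -> psd_force e (J :\ x) x).
Proof.
move=> hc J c; have := allsets_sound hc (bits vert J); rewrite /checkFB -(card_bits Hvi Hiv) c eqxx.
case: ifP => [sd _ | _]; first by left; exact: (@sderive_sound V e nb vert idx Hvi Hiv He 16 J sd).
case: ifP => [hl _ | _ dd]; last by left; exact: (@derive_sound V e nb vert idx Hvi Hiv He Hs 16 J dd).
right => x xJ; rewrite lallE in hl; move: (allP hl _ (mem_enum16 (idx x))).
rewrite -(inB Hvi) xJ lhasE => /hasP [u _]; rewrite del_bits => sb.
by rewrite -{2}(Hvi x); exact: (@simpleb_sound V e nb vert idx Hvi Hiv He _ _ _ sb).
Qed.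

Lemma sym_gen : (forall i j, adjb nb i j = adjb nb j i) -> symmetric e.
Proof. by move=> H x y; rewrite -(Hvi x) -(Hvi y) !He H. Qed.

End Facts.


Definition q0 : 'I_4 := @Ordinal 4 0 isT.
Definition q1 : 'I_4 := @Ordinal 4 1 isT.
Definition q2 : 'I_4 := @Ordinal 4 2 isT.
Definition q3 : 'I_4 := @Ordinal 4 3 isT.
Definition vertR (i : i16) : 'I_4 * 'I_4 := match i with I0 => (q0, q0) | I1 => (q0, q1) | I2 => (q0, q2) | I3 => (q0, q3) | I4 => (q1, q0) | I5 => (q1, q1) | I6 => (q1, q2) | I7 => (q1, q3) | I8 => (q2, q0) | I9 => (q2, q1) | I10 => (q2, q2) | I11 => (q2, q3) | I12 => (q3, q0) | I13 => (q3, q1) | I14 => (q3, q2) | I15 => (q3, q3) end.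
Definition vertS (i : i16) : 'Z_4 * 'Z_4 := vertR i.
Definition idxR (v : 'I_4 * 'I_4) : i16 := nat_to_i16 (4 * v.1 + v.2).
Definition idxS (v : 'Z_4 * 'Z_4) : i16 := nat_to_i16 (4 * v.1 + v.2).

Lemma HviR : forall v, vertR (idxR v) = v.
Proof.
by case=> [[[|[|[|[|a]]]] Ha] [[|[|[|[|b]]]] Hb]] //; apply/eqP; vm_compute; reflexivity.
Qed.
Lemma HivR : forall i, idxR (vertR i) = i.
Proof. by case; vm_compute. Qed.
Lemma HeR : forall i j, rook44 (vertR i) (vertR j) = adjb nbrs_rook i j.
Proof.
have H : all (fun i => all (fun j => rook44 (vertR i) (vertR j) == adjb nbrs_rook i j) enum16) enum16.
  vm_compute; reflexivity.
move=> i j; apply/eqP; exact: (allP (allP H _ (mem_enum16 i)) _ (mem_enum16 j)).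
Qed.
Lemma adjR_sym : forall i j, adjb nbrs_rook i j = adjb nbrs_rook j i.
Proof.
have H : all (fun i => all (fun j => adjb nbrs_rook i j == adjb nbrs_rook j i) enum16) enum16.
  vm_compute; reflexivity.
move=> i j; apply/eqP; exact: (allP (allP H _ (mem_enum16 i)) _ (mem_enum16 j)).
Qed.
Lemma HsR : symmetric rook44.
Proof. exact: (sym_gen HviR HeR adjR_sym). Qed.

Lemma HviS : forall v, vertS (idxS v) = v.
Proof.
by case=> [[[|[|[|[|a]]]] Ha] [[|[|[|[|b]]]] Hb]] //; apply/eqP; vm_compute; reflexivity.
Qed.
Lemma HivS : forall i, idxS (vertS i) = i.
Proof. by case; vm_compute. Qed.
Lemma HeS : forall i j, shrikhande (vertS i) (vertS j) = adjb nbrs_shri i j.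
Proof.
have H : all (fun i => all (fun j => shrikhande (vertS i) (vertS j) == adjb nbrs_shri i j) enum16) enum16.
  vm_compute; reflexivity.
move=> i j; apply/eqP; exact: (allP (allP H _ (mem_enum16 i)) _ (mem_enum16 j)).
Qed.
Lemma adjS_sym : forall i j, adjb nbrs_shri i j = adjb nbrs_shri j i.
Proof.
have H : all (fun i => all (fun j => adjb nbrs_shri i j == adjb nbrs_shri j i) enum16) enum16.
  vm_compute; reflexivity.
move=> i j; apply/eqP; exact: (allP (allP H _ (mem_enum16 i)) _ (mem_enum16 j)).
Qed.
Lemma HsS : symmetric shrikhande.
Proof. exact: (sym_gen HviS HeS adjS_sym). Qed.

Lemma chkF0 : allsets (checkF0 nbrs_rook).
Proof. vm_compute; reflexivity. Qed.
Lemma chkSmall : lall (fun F => fortb nbrs_rook (of_list F)) smallforts.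
Proof. vm_compute; reflexivity. Qed.
Lemma chkFA : allsets (checkFA nbrs_rook).
Proof. vm_compute; reflexivity. Qed.
Lemma chkFB : allsets (checkFB nbrs_rook).
Proof. vm_compute; reflexivity. Qed.

Lemma rook_F0 : forall B : {set 'I_4 * 'I_4}, psd_derives rook44 B -> 10 <= #|B|.
Proof. exact: (F0_gen HviR HivR HeR HsR chkF0 chkSmall). Qed.
Lemma rook_FA : forall D : {set 'I_4 * 'I_4}, 13 <= #|D| -> psd_derives rook44 D.
Proof. exact: (FA_gen HviR HivR HeR chkFA). Qed.
Lemma rook_FB : forall J : {set 'I_4 * 'I_4}, #|J| = 12 ->
  psd_derives rook44 J \/ (forall x, x \in J -> psd_force rook44 (J :\ x) x).
Proof. exact: (FB_gen HviR HivR HeR HsR chkFB). Qed.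

Definition Tlist := of_list [:: I0; I1; I2; I3; I4; I5; I6; I8; I12].
Definition Tshri : {set 'Z_4 * 'Z_4} := setOf idxS Tlist.

Lemma chkT : derive nbrs_shri 16 Tlist.
Proof. vm_compute; reflexivity. Qed.

Lemma dT : psd_derives shrikhande Tshri.
Proof.
apply: (@derive_sound _ shrikhande nbrs_shri vertS idxS HviS HivS HeS HsS 16).
by rewrite /Tshri (bits_setOf HivS); exact: chkT.
Qed.

Lemma cardT : #|Tshri| = 9.
Proof. by rewrite (card_bits HviS HivS) /Tshri (bits_setOf HivS); vm_compute. Qed.

Lemma cardCT : #|~: Tshri| = 7.
Proof. by rewrite cardsCs setCK (cardV HviS HivS) cardT. Qed.

Theorem proposition3p5 (r : nat) (hr : 11 <= r) (k1 k2 : nat) :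
  is_Zplus (cart_prod rook44 (complete_graph r)) k1 ->
  is_Zplus (cart_prod shrikhande (complete_graph r)) k2 ->
  k1 <> k2.
Proof.
move=> [[S1 [d1 c1]] _] [_ min2].
have lb := @lower_bound _ rook44 r rook_FA rook_FB 10 S1 rook_F0 d1.
have r0 : 0 < r by lia.
have r1 : r.-1 < r by lia.
pose last := Ordinal r1.
pose j0 := Ordinal r0.
have j0l : j0 != last by rewrite -val_eqE /=; lia.
have ub := min2 _ (@upper _ shrikhande r Tshri last j0 HsS dT j0l).
have cs := @card_Sstar _ r Tshri last j0 j0l.
rewrite cardT cardCT in cs.
have ub' : k2 + 9 <= r * 9 + 7 by rewrite -cs leq_add2r.
move=> e12; move: lb ub'; rewrite c1 e12; lia.
Qed.
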